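(* Suppose $\widehat{\mathcal L}^{Y\text{-}A\text{-}B}$-uniform-monotonicity holds for the SCC $F$. Let $(i,\theta)\in\mathcal I\times\Theta$. If $F(\theta)\subseteq\arg\min_{z\in Z^*}u_i^\theta(z)$ and $Z^*\cap\mathcal L_i^Z(F(\theta),\theta)$ is an $i$-$Z^*$-max set, then $\Xi_i(\theta)\ne\emptyset$.
   Context: Standing setup: $\mathcal I=\{1,\dots,I\}$ finite, $I\ge 3$; $\Theta$ finite or countably infinite; $Z$ finite; $Y=\Delta(Z)$; $F:\Theta\to 2^Z\setminus\{\emptyset\}$; $u_i^\theta:Z\to\mathbb R$, $U_i^\theta(y)=\sum_zy_zu_i^\theta(z)$; $\mathcal L_i^Y(\alpha,\theta)=\{y\in Y:U_i^\theta(\alpha)\ge U_i^\theta(y)\}$, $\mathcal L_i^Z(\alpha,\theta)=\{z\in Z:U_i^\theta(\alpha)\ge u_i^\theta(z)\}$, $\mathcal L_i^Z(E,\theta)=\bigcap_{z\in E}\mathcal L_i^Z(z,\theta)$; UNIF$(E)$ is the uniform lottery on $E$. A nonempty $E\subseteq Z$ is an $i$-max set if for some $\theta$, $E\subseteq\arg\max_{z\in E}u_i^\theta(z)$ and $E\subseteq\arg\max_{z\in Z}u_j^\theta(z)$ for all $j\ne i$. $Z^*=\bigcup_\theta F(\theta)$ if $Z$ is an $i$-max set for some $i$, else $Z^*=Z$. A nonempty $E\subseteq Z^*$ is an $i$-$Z^*$-$\theta$-max set if $E\subseteq\arg\max_{z\in E}u_i^\theta(z)$ and $E\subseteq\arg\max_{z\in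 Z^*}u_j^\theta(z)$ for all $j\ne i$; $\Lambda^i(E)=\{\theta:E\text{ is an }i\text{-}Z^*\text{-}\theta\text{-max set}\}$ ($=\emptyset$ for $E=\emptyset$); $E$ is an $i$-$Z^*$-max set if $\Lambda^i(E)\ne\emptyset$. $\Theta_i^\theta=\{\theta':F(\theta)\text{ is an }i\text{-}Z^*\text{-}\theta'\text{-max set and }F(\theta)\subseteq F(\theta')\}$; $\Xi_i(\theta)=\{K\subseteq\Theta_i^\theta,K\ne\emptyset:\Theta_i^\theta\cap\Lambda^i(Z^*\cap\mathcal L_i^Z(F(\theta),\theta)\cap\bigcap_{\theta'\in K}F(\theta'))=K\}$. $\widehat{\mathcal L}_i^{Y\text{-}A\text{-}B}(\mathrm{UNIF}[F(\theta)],\theta)=\Delta[Z^*\cap\mathcal L_i^Z(F(\theta),\theta)\cap\bigcup_{K\in\Xi_i(\theta)}\bigcap_{\theta'\in K}F(\theta')]$ if $F(\theta)\subseteq\arg\min_{z\in Z^*}u_i^\theta(z)$, $\Xi_i(\theta)\ne\emptyset$ and $Z^*\cap\mathcal L_i^Z(F(\theta),\theta)$ is an $i$-$Z^*$-max set; otherwise $\Delta(Z^* )\cap\mathcal L_i^Y(\mathrm{UNIF}[F(\theta)],\theta)$. $\widehat{\mathcal L}^{Y\text{-}A\text{-}B}$-uniform-monotonicity: for all $\theta,\theta'$, [$\widehat{\mathcal L}_i^{Y\text{-}A\text{-}B}(\mathrm{UNIF}[F(\theta)],\theta)\subseteq\mathcal L_i^Y(\mathrm{UNIF}[F(\theta)],\theta')$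 for all $i$] implies $F(\theta)\subseteq F(\theta')$. *)

(* Defs.v *)
From mathcomp Require Import all_boot all_order all_algebra.
Set Implicit Arguments. Unset Strict Implicit. Unset Printing Implicit Defensive.
Import Order.TTheory GRing.Theory Num.Theory.
Local Open Scope ring_scope.

(* Subsets of Z / Th other than F(theta) are
   Prop-valued predicates. *)

Section Defs.
Context {R : realFieldType} {I : finType} {Th : countType} {Z : finType}.
Variable F : Th -> {set Z}.
Variable u : I -> Th -> Z -> R.

Definition is_lottery (y : {ffun Z -> R}) : Prop :=
  (forall z, 0 <= y z) /\ \sum_z y z = 1.

Definition inDelta (E : Z -> Prop) (y : {ffun Z -> R}) : Prop :=
  is_lottery y /\ (forall z, y z != 0 -> E z).

Definition EU (i : I) (t : Th) (y : {ffun Z -> R}) : R :=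
  \sum_z y z * u i t z.

Definition UNIF (E : {set Z}) : {ffun Z -> R} :=
  [ffun z => if z \in E then (#|E|%:R)^-1 else 0].

Definition LY (i : I) (alpha : {ffun Z -> R}) (t : Th) (y : {ffun Z -> R}) : Prop :=
  is_lottery y /\ EU i t y <= EU i t alpha.

Definition LZset (i : I) (E : {set Z}) (t : Th) (z' : Z) : Prop :=
  forall z, z \in E -> u i t z' <= u i t z.

Definition imax_set (i : I) (E : Z -> Prop) : Prop :=
  (exists z, E z) /\
  exists t, (forall z, E z -> forall z', E z' -> u i t z' <= u i t z) /\
            (forall j, j != i -> forall z, E z -> forall z', u j t z' <= u j t z).

Definition Zstar (z : Z) : Prop :=
  ((exists i, imax_set i (fun _ => True)) /\ (exists t, z \in F t)) \/
  (~ (exists i, imax_set i (fun _ => True))).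

Definition iZt_max (i : I) (E : Z -> Prop) (t : Th) : Prop :=
  (exists z, E z) /\ (forall z, E z -> Zstar z) /\
  (forall z, E z -> forall z', E z' -> u i t z' <= u i t z) /\
  (forall j, j != i -> forall z, E z -> forall z', Zstar z' -> u j t z' <= u j t z).

Definition Lambda (i : I) (E : Z -> Prop) (t : Th) : Prop := iZt_max i E t.

Definition iZ_max (i : I) (E : Z -> Prop) : Prop := exists t, Lambda i E t.

Definition Theta_it (i : I) (t t' : Th) : Prop :=
  iZt_max i (fun z => z \in F t) t' /\ F t \subset F t'.

Definition XiSet (i : I) (t : Th) (K : Th -> Prop) (z : Z) : Prop :=
  Zstar z /\ LZset i (F t) t z /\ (forall t', K t' -> z \in F t').

Definition inXi (i : I) (t : Th) (K : Th -> Prop) : Prop :=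
  (forall t', K t' -> Theta_it i t t') /\ (exists t', K t') /\
  (forall t', (Theta_it i t t' /\ Lambda i (XiSet i t K) t') <-> K t').

Definition Xi_nonempty (i : I) (t : Th) : Prop := exists K, inXi i t K.

Definition F_in_argmin (i : I) (t : Th) : Prop :=
  forall z, z \in F t -> Zstar z /\ (forall z', Zstar z' -> u i t z <= u i t z').

Definition hatL_cond (i : I) (t : Th) : Prop :=
  F_in_argmin i t /\ Xi_nonempty i t /\
  iZ_max i (fun z => Zstar z /\ LZset i (F t) t z).

Definition hatL (i : I) (t : Th) (y : {ffun Z -> R}) : Prop :=
  (hatL_cond i t /\
    inDelta (fun z => Zstar z /\ LZset i (F t) t z /\
                      exists K, inXi i t K /\ forall t', K t' -> z \in F t') y) \/
  (~ hatL_cond i t /\ inDelta Zstar y /\ LY i (UNIF (F t)) t y).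

Definition hatL_uniform_monotonicity : Prop :=
  forall t t', (forall i y, hatL i t y -> LY i (UNIF (F t)) t' y) ->
               F t \subset F t'.

End Defs.

(* Main.v *)
Require Import Defs.
From mathcomp Require Import all_boot all_order all_algebra.
From mathcomp Require Import boolp.
From Stdlib Require Import Classical_Prop Classical_Pred_Type.
Import Order.TTheory GRing.Theory Num.Theory.

Section Aux.
Local Open Scope ring_scope.
Context {R : realFieldType} {Z : finType}.

Lemma lot_le {y : {ffun Z -> R}} {f : Z -> R} {c} :
  is_lottery y -> (forall z, y z != 0 -> f z <= c) -> \sum_z y z * f z <= c.
Proof.
move=> [y0 y1] H.
apply: (@le_trans _ _ (\sum_z y z * c)).
  apply: ler_sum => z _; have [->|nz] := eqVneq (y z) 0; first by rewrite !mul0r.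
  by apply: ler_wpM2l => //; apply: H.
by rewrite -mulr_suml y1 mul1r.
Qed.

Lemma lot_ge {y : {ffun Z -> R}} {f : Z -> R} {c} :
  is_lottery y -> (forall z, y z != 0 -> c <= f z) -> c <= \sum_z y z * f z.
Proof.
move=> [y0 y1] H.
apply: (@le_trans _ _ (\sum_z y z * c)).
  by rewrite -mulr_suml y1 mul1r.
apply: ler_sum => z _; have [->|nz] := eqVneq (y z) 0; first by rewrite !mul0r.
by apply: ler_wpM2l => //; apply: H.
Qed.

Lemma lot_tight {y : {ffun Z -> R}} {f : Z -> R} {c} :
  is_lottery y -> \sum_z y z * f z <= c -> (forall z, y z != 0 -> c <= f z) ->
  forall z, y z != 0 -> f z <= c.
Proof.
move=> [y0 y1] Hs H z nz.
have E : \sum_z y z * (f z - c) = 0.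
  apply/eqP; rewrite eq_le; apply/andP; split.
    under eq_bigr => x _ do rewrite mulrBr.
    rewrite sumrB -mulr_suml y1 mul1r subr_le0 //.
  apply: sumr_ge0 => x _; have [->|nx] := eqVneq (y x) 0; first by rewrite mul0r.
  by rewrite mulr_ge0 // subr_ge0; apply: H.
have Hp : forall i : Z, true -> 0 <= y i * (f i - c).
  move=> x _; have [->|nx] := eqVneq (y x) 0; first by rewrite mul0r.
  by rewrite mulr_ge0 // subr_ge0; apply: H.
have := psumr_eq0P Hp E (i:=z) isT.
move=> /eqP; rewrite mulf_eq0 (negbTE nz) /= subr_eq0 => /eqP ->.
exact: lexx.
Qed.

Lemma unif_lot (A : {set Z}) : A != set0 -> is_lottery (UNIF A : {ffun Z -> R}).
Proof.
move=> nA; split.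
  by move=> z; rewrite ffunE; case: ifP => // _; rewrite invr_ge0 ler0n.
under eq_bigr => z _ do rewrite ffunE.
rewrite -big_mkcond /= sumr_const -[_ *+ #|A|]mulr_natr mulVf //.
by rewrite pnatr_eq0 -lt0n card_gt0.
Qed.

Lemma unif_supp {A : {set Z}} {z} : (UNIF A : {ffun Z -> R}) z != 0 -> z \in A.
Proof. by rewrite ffunE; case: ifP => //; rewrite eqxx. Qed.

End Aux.

Lemma iZt_down (R : realFieldType) (I : finType) (Th : countType) (Z : finType)
  (F : Th -> {set Z}) (u : I -> Th -> Z -> R) i (A B : Z -> Prop) t' :
  (forall z, B z -> A z) -> (exists z, B z) -> iZt_max F u i A t' -> iZt_max F u i B t'.
Proof.
move=> BA [z Bz] [_ [HZ [Hc Hd]]]; split; first by exists z.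
split; first by move=> x /BA; exact: HZ.
split; first by move=> x /BA hx y /BA hy; exact: Hc.
by move=> j nj x /BA hx; exact: Hd.
Qed.

Theorem lemma10 (R : realFieldType) (I : finType) (Th : countType) (Z : finType)
  (F : Th -> {set Z}) (u : I -> Th -> Z -> R) :
  3 <= #|I| ->
  (forall t, F t != set0) ->
  hatL_uniform_monotonicity F u ->
  forall (i : I) (t : Th),
    F_in_argmin F u i t ->
    iZ_max F u i (fun z => Zstar F u z /\ LZset u i (F t) t z) ->
    Xi_nonempty F u i t.
Proof.
move=> _ Fne mono i t Harg [t0 Ht0].
set E := fun z => Zstar F u z /\ LZset u i (F t) t z.
have [z0 z0F] : exists z0, z0 \in F t by apply/set0Pn.
have Fsub : forall z, z \in F t -> E z.
  move=> z zF; split; first exact: (Harg z zF).1.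
  move=> z'' z''F; exact: (Harg z zF).2 z'' (Harg z'' z''F).1.
have [//|nXi] := pselect (Xi_nonempty F u i t).
have unl := @unif_lot R Z (F t) (Fne t).
have Th1 : forall t', Lambda F u i E t' -> Theta_it F u i t t'.
  move=> t' Lt'; split.
    apply: iZt_down Lt'; [exact: Fsub | by exists z0].
  apply: mono => j y Hy.
  have [ly sy] : is_lottery y /\ forall z, y z != 0%R -> Zstar F u z.
    case: Hy => [[_ [ly sy]] | [_ [[ly sy] _]]].
      by split => // z nz; exact: (sy z nz).1.
    by split => // z nz; exact: sy.
  split => //; rewrite /EU.
  case: (eqVneq j i) => [Eji|nji].
  - subst j.
    have suppE : forall z, y z != 0%R -> E z.
      case: Hy => [[[_ [hx _]] _] | [_ [_ [_ hle]]]]; first by case: nXi.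
      have h1 : (EU u i t (UNIF (F t)) <= u i t z0)%R.
        apply: lot_le unl _ => z nz.
        have zF := unif_supp nz. exact: ((Harg z zF).2 z0 (Harg z0 z0F).1).
      have hy := lot_tight ly (le_trans hle h1) (fun z nz => (Harg z0 z0F).2 z (sy z nz)).
      move=> z nz; split; first exact: sy.
      move=> z'' z''F; apply: le_trans (hy z nz) _.
      exact: (Harg z0 z0F).2 z'' (Harg z'' z''F).1.
    case: Lt' => _ [_ [Hc _]].
    apply: (@le_trans _ _ (u i t' z0)).
      apply: lot_le ly _ => z nz; exact: Hc z0 (Fsub z0 z0F) z (suppE z nz).
    apply: lot_ge unl _ => z nz; exact: Hc z (Fsub z (unif_supp nz)) z0 (Fsub z0 z0F).
  - case: Lt' => _ [_ [_ Hd]].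
    apply: (@le_trans _ _ (u j t' z0)).
      apply: lot_le ly _ => z nz; exact: Hd j nji z0 (Fsub z0 z0F) z (sy z nz).
    apply: lot_ge unl _ => z nz.
    exact: Hd j nji z (Fsub z (unif_supp nz)) z0 (Fsub z0 z0F).1.
pose S K := XiSet F u i t K.
pose Tt := Theta_it F u i t.
have Sne : forall K, (forall t', K t' -> Tt t') -> exists z, S K z.
  move=> K HK; exists z0; split; first exact: (Fsub z0 z0F).1.
  split; first exact: (Fsub z0 z0F).2.
  by move=> t' /HK [_ /subsetP]; apply.
have SE : forall K z, S K z -> E z by move=> K z [? [? _]].
pose P K := [/\ exists t', K t', forall t', K t' -> Tt t' &
                forall t', K t' -> Lambda F u i (S K) t'].
have key : forall n K, P K -> #|[set z | `[< S K z >]]| < n -> False.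
  elim=> [//|n IH] K [Kne KT KL] Hc.
  pose K' := fun t' => Tt t' /\ Lambda F u i (S K) t'.
  have KK' : forall t', K t' -> K' t' by move=> t' Kt; split; auto.
  have S'S : forall z, S K' z -> S K z.
    move=> z [a [b c]]; split => //; split => // t' /KK'; exact: c.
  have PK' : P K'.
    split; first by case: Kne => t' ?; exists t'; exact: KK'.
      by move=> t' [].
    move=> t' [_ L]; apply: iZt_down L; first exact: S'S.
    exact: (Sne K' (fun t' H => H.1)).
  have [sub|nsub] := pselect (forall z, S K z -> S K' z).
    apply: nXi; exists K'; split; first by move=> t' [].
    split; first by case: PK' => ?.
    move=> t'; split.
      move=> [h1 h2]; split => //; apply: iZt_down h2; first exact: sub.
      exact: Sne.
    move=> [h1 h2]; split => //; apply: iZt_down h2; first exact: S'S.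
    exact: (Sne K' (fun t' H => H.1)).
  have [z Hz] := not_all_ex_not _ _ nsub.
  have [Sz nSz] := imply_to_and _ _ Hz.
  apply: (IH K' PK').
  have Hp : [set z | `[< S K' z >]] \proper [set z | `[< S K z >]].
    apply/properP; split.
      apply/subsetP => x; rewrite !inE => /asboolP ?; apply/asboolP; exact: S'S.
    exists z; rewrite inE; first by apply/asboolP.
    by apply/negP => /asboolP.
  rewrite ltnS in Hc; exact: leq_trans (proper_card Hp) Hc.
pose K0 := fun t' => Lambda F u i E t'.
exfalso; apply: (key (#|[set z | `[< S K0 z >]]|).+1 K0) => //.
split; first by exists t0.
  exact: Th1.
move=> t' L; apply: iZt_down L; first exact: SE.
exact: Sne Th1.
Qed.
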